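(* Let $G$ be a $d$-regular graph with a vertex $u$. The vertices $(0,u)$ and $(1,u)$ are strongly cospectral (with respect to the Laplacian) in $\uparrow^{2}G$ if and only if $d\notin\sigma_u(G)$. In particular, for any vertex $u$, the vertices $(0,u)$ and $(1,u)$ are strongly cospectral in: (i) $\uparrow^{2}K_{d+1}$ for all $d\geq 1$; (ii) $\uparrow^{2}C_n$ if and only if $n\not\equiv 0 \pmod 4$; (iii) $\uparrow^{2}Q_d$ if and only if $d$ is odd.
   Context: All graphs are simple, undirected and unweighted. For a graph $X$ with Laplacian $L=D-A$, spectral decomposition $L=\sum_\lambda \lambda E_\lambda$ over its distinct eigenvalues ($E_\lambda$ orthogonal eigenprojections), the eigenvalue support of a vertex $u$ is $\sigma_u(X)=\{\lambda:E_\lambda\mathbf{e}_u\neq\mathbf{0}\}$; vertices $u,v$ are strongly cospectral if $E_\lambda\mathbf{e}_u=\pm E_\lambda\mathbf{e}_v$ for all $\lambda\in\sigma_u(X)$. The blow-up $\uparrow^{2}G$ has vertex set $\mathbb{Z}_2\times V(G)$, with $(l,u)\sim(m,v)$ iff $u\sim v$ in $G$. $K_n$ is the complete graph, $C_n$ the $n$-cycle, $Q_d$ the $d$-dimensional hypercube. *)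

(* Defs.v *)
From HB Require Import structures.
From mathcomp Require Import all_boot all_order all_algebra.
Set Implicit Arguments. Unset Strict Implicit. Unset Printing Implicit Defensive.
Import Order.TTheory GRing.Theory Num.Theory.
Local Open Scope ring_scope.

Definition simple_graph (T : finType) (e : rel T) : Prop :=
  symmetric e /\ irreflexive e.

Definition deg (T : finType) (e : rel T) (u : T) : nat := #|[set v | e u v]|.

Definition regular (T : finType) (e : rel T) (d : nat) : Prop :=
  forall u, deg e u = d.

Definition laplacian (R : nzRingType) (T : finType) (e : rel T) : 'M[R]_#|T| :=
  \matrix_(i, j)
    (if enum_val i == enum_val j then (deg e (enum_val i))%:R
     else if e (enum_val i) (enum_val j) then -1 else 0).

Definition orth_proj (R : fieldType) (m n : nat) (B : 'M[R]_(m, n)) : 'M[R]_n :=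
  let Bb := row_base B in (Bb^T *m invmx (Bb *m Bb^T)) *m Bb.

(* E_lambda : orthogonal projection onto the lambda-eigenspace of L
   (the zero matrix when lambda is not an eigenvalue). *)
Definition eigproj (R : fieldType) (n : nat) (L : 'M[R]_n) (lam : R) : 'M[R]_n :=
  orth_proj (eigenspace L lam).

Definition evec (R : nzRingType) (T : finType) (u : T) : 'cV[R]_#|T| :=
  \col_i (enum_val i == u)%:R.

Definition eig_support (R : fieldType) (T : finType) (e : rel T) (u : T) (lam : R) : Prop :=
  eigproj (laplacian R e) lam *m evec R u != 0.

Definition strongly_cospectral (R : fieldType) (T : finType) (e : rel T) (u v : T) : Prop :=
  forall lam : R, eig_support e u lam ->
    (eigproj (laplacian R e) lam *m evec R u = eigproj (laplacian R e) lam *m evec R v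
     \/ eigproj (laplacian R e) lam *m evec R u = - (eigproj (laplacian R e) lam *m evec R v)).

Definition blowup2 (T : finType) (e : rel T) : rel ('I_2 * T) :=
  fun x y => e x.2 y.2.

Definition z0 : 'I_2 := @Ordinal 2 0 isT.
Definition z1 : 'I_2 := @Ordinal 2 1 isT.

Definition complete_graph (n : nat) : rel 'I_n := fun i j => i != j.

Definition cycle_graph (n : nat) : rel 'I_n :=
  fun i j => ((val j == (val i).+1 %% n) || (val i == (val j).+1 %% n))%N.

Definition hypercube (d : nat) : rel {ffun 'I_d -> bool} :=
  fun f g => #|[set i | f i != g i]| == 1%N.

(* Main.v *)
Require Import Defs.
From Stdlib Require Import Setoid.
From mathcomp Require Import all_boot all_order all_algebra.
From mathcomp Require Import ring lra zify.
Set Implicit Arguments. Unset Strict Implicit. Unset Printing Implicit Defensive.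
Import Order.TTheory GRing.Theory Num.Theory.
Local Open Scope ring_scope.


Section Proj.
Variable R : rcfType.

Lemma rv_sq0 k (v : 'rV[R]_k) : v *m v^T = 0 -> v = 0.
Proof.
move=> /matrixP/(_ 0 0); rewrite !mxE => H.
apply/matrixP => i j; rewrite (ord1 i) mxE.
have H2 : forall j0 : 'I_k, true -> v 0 j0 * v^T j0 0 = 0.
  apply: psumr_eq0P H => j0 _; rewrite mxE -expr2; exact: sqr_ge0.
by move/eqP: (H2 j isT); rewrite mxE mulf_eq0 orbb => /eqP.
Qed.

Lemma gram_unit m n (B : 'M[R]_(m, n)) : row_free B -> B *m B^T \in unitmx.
Proof.
move=> fB; rewrite -row_free_unit -kermx_eq0 -submx0.
apply/row_subP => i.
set c := row i (kermx (B *m B^T)).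
have : c *m (B *m B^T) = 0 by apply/sub_kermxP; exact: row_sub.
move=> H.
have H1 : (c *m B) *m (c *m B)^T = 0.
  by rewrite trmx_mul mulmxA -(mulmxA c B) H mul0mx.
have H2 := rv_sq0 H1.
have : (c <= kermx B)%MS by apply/sub_kermxP.
have K : kermx B = 0 by apply/eqP; rewrite kermx_eq0.
by rewrite K.
Qed.

Lemma proj_ker m n (B : 'M[R]_(m, n)) (x : 'cV[R]_n) :
  orth_proj B *m x = 0 <-> B *m x = 0.
Proof.
rewrite /orth_proj; set Bb := row_base B.
have U : Bb *m Bb^T \in unitmx := gram_unit (row_base_free B).
have S1 : (B <= Bb)%MS by rewrite eq_row_base.
have S2 : (Bb <= B)%MS by rewrite eq_row_base.
clearbody Bb.
split => H.
- have : Bb *m x = 0.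
    have := congr1 (mulmx Bb) H; rewrite mulmx0 !mulmxA.
    by rewrite mulmxV // mul1mx.
  move=> H1; move/submxP: S1 => [D ->].
  by rewrite -mulmxA H1 mulmx0.
- move/submxP: S2 => [D E].
  by rewrite E -!mulmxA H !mulmx0.
Qed.

Lemma proj_id m n (B : 'M[R]_(m, n)) (x : 'cV[R]_n) :
  (x^T <= B)%MS -> orth_proj B *m x = x.
Proof.
rewrite /orth_proj; set Bb := row_base B => Hx.
have U : Bb *m Bb^T \in unitmx := gram_unit (row_base_free B).
have /submxP [c Ec] : (x^T <= Bb)%MS by rewrite eq_row_base.
clearbody Bb.
have -> : x = Bb^T *m c^T by rewrite -trmx_mul -Ec trmxK.
by rewrite -!mulmxA (mulmxA Bb) (mulmxA (invmx _)) mulVmx // mul1mx.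
Qed.

Lemma col_ker m n (B : 'M[R]_(m, n)) (x : 'cV[R]_n) :
  B *m x = 0 <-> forall w : 'rV_n, (w <= B)%MS -> w *m x = 0.
Proof.
split.
- by move=> H w /submxP [D ->]; rewrite -mulmxA H mulmx0.
- move=> H; apply/row_matrixP => i; rewrite row_mul row0; apply: H; exact: row_sub.
Qed.
End Proj.


Section Graph.
Variable R : rcfType.
Variable T : finType.
Variable e : rel T.

Definition lapf (x y : T) : R :=
  if x == y then (deg e x)%:R else if e x y then -1 else 0.

Lemma lapE i j : laplacian R e i j = lapf (enum_val i) (enum_val j).
Proof. by rewrite mxE. Qed.

Lemma lap_sym : symmetric e -> (laplacian R e)^T = laplacian R e.
Proof.
move=> se; apply/matrixP => i j; rewrite mxE !lapE /lapf eq_sym se.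
by case: eqP => // ->.
Qed.

Definition fun_of (w : 'rV[R]_#|T|) : T -> R := fun x => w 0 (enum_rank x).

Lemma sum_enum (F : T -> R) : \sum_(i < #|T|) F (enum_val i) = \sum_x F x.
Proof.
rewrite (reindex (@enum_val T T)) //=.
exists enum_rank => x _; [exact: enum_valK | exact: enum_rankK].
Qed.

Lemma row_lap (w : 'rV[R]_#|T|) y : simple_graph e ->
  (w *m laplacian R e) 0 (enum_rank y) =
  (deg e y)%:R * fun_of w y - \sum_(x | e y x) fun_of w x.
Proof.
move=> [se ie]; rewrite mxE.
under eq_bigr => i _ do rewrite lapE enum_rankK -{1}(enum_valK i).
rewrite (sum_enum (fun x => w 0 (enum_rank x) * lapf x y)).
rewrite (bigD1 y) //= /lapf eqxx mulrC; congr (_ + _).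
rewrite -sumrN big_mkcond [RHS]big_mkcond /=; apply: eq_bigr => x _.
rewrite se; case: eqP => [->|_] /=; first by rewrite ie.
by case: (e y x); rewrite ?mulrN1 ?mulr0 ?oppr0.
Qed.

Definition eigfun (lam : R) (g : T -> R) :=
  forall y, (deg e y)%:R * g y - \sum_(x | e y x) g x = lam * g y.

Lemma eigfun_ext lam g1 g2 : g1 =1 g2 -> eigfun lam g1 -> eigfun lam g2.
Proof.
move=> E H y; rewrite -E -(H y); congr (_ - _); apply: eq_bigr => x _; by rewrite E.
Qed.

Lemma eig_row (w : 'rV[R]_#|T|) lam : simple_graph e ->
  (w *m laplacian R e = lam *: w <-> eigfun lam (fun_of w)).
Proof.
move=> sg; split.
- move=> H y; rewrite -row_lap // H mxE //.
- move=> H; apply/matrixP => i j; rewrite (ord1 i) -(enum_valK j) row_lap // H.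
  by rewrite mxE.
Qed.

Lemma rowcol (w : 'rV[R]_#|T|) (x : 'cV[R]_#|T|) :
  (w *m x) 0 0 = \sum_y fun_of w y * x (enum_rank y) 0.
Proof.
rewrite mxE -sum_enum; apply: eq_bigr => i _; by rewrite /fun_of enum_valK.
Qed.

Lemma mx11_0 (M : 'M[R]_1) : M = 0 <-> M 0 0 = 0.
Proof.
split; first by move=> ->; rewrite mxE.
by move=> H; apply/matrixP => i j; rewrite (ord1 i) (ord1 j) H mxE.
Qed.

Lemma eig_ker (x : 'cV[R]_#|T|) lam : simple_graph e ->
  (eigenspace (laplacian R e) lam *m x = 0 <->
   forall g, eigfun lam g -> \sum_y g y * x (enum_rank y) 0 = 0).
Proof.
move=> sg; rewrite col_ker; split.
- move=> H g Hg.
  pose w : 'rV[R]_#|T| := \row_i g (enum_val i).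
  have Ew : fun_of w =1 g by move=> y; rewrite /fun_of mxE enum_rankK.
  have : w *m x = 0.
    apply: H; apply/eigenspaceP; apply/eig_row => //.
    exact: eigfun_ext Hg => y; rewrite Ew.
  move/mx11_0; rewrite rowcol => H0; rewrite -[RHS]H0.
  apply: eq_bigr => y _; by rewrite Ew.
- move=> H w /eigenspaceP /(eig_row _ _ sg) Hw.
  by apply/mx11_0; rewrite rowcol; apply: H.
Qed.

Lemma not_supp u lam : simple_graph e ->
  (~ eig_support e u lam <-> forall g, eigfun lam g -> g u = 0).
Proof.
move=> sg; rewrite /eig_support.
have -> : (~ (eigproj (laplacian R e) lam *m evec R u != 0)) <->
          eigproj (laplacian R e) lam *m evec R u = 0.
  by split => [/negP/negbNE/eqP | ->] //; rewrite eqxx.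
rewrite /eigproj proj_ker eig_ker //.
have E : forall g : T -> R, \sum_y g y * evec R u (enum_rank y) 0 = g u.
  move=> g; rewrite (bigD1 u) //= mxE enum_rankK eqxx mulr1 big1 ?addr0 //.
  by move=> y /negbTE; rewrite mxE enum_rankK => ->; rewrite mulr0.
by split => H g Hg; [rewrite -E | rewrite E]; apply: H.
Qed.

End Graph.


Section Blowup.
Variable R : rcfType.
Variable T : finType.
Variable e : rel T.

Definition kerA (g : T -> R) := forall y, \sum_(x | e y x) g x = 0.

Lemma eigfun_reg d g : regular e d -> (eigfun e (d%:R : R) g <-> kerA g).
Proof.
move=> rg; split => H y; have := H y; rewrite rg => H1; lra.
Qed.

Lemma sum_evec (T' : finType) (h : T' -> R) (a : T') :
  \sum_y h y * evec R a (enum_rank y) 0 = h a.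
Proof.
rewrite (bigD1 a) //= mxE enum_rankK eqxx mulr1 big1 ?addr0 //.
by move=> y /negbTE; rewrite mxE enum_rankK => ->; rewrite mulr0.
Qed.

Lemma simple_blowup : simple_graph e -> simple_graph (blowup2 e).
Proof. by move=> [se ie]; split => [x y|x]; rewrite /blowup2; [exact: se | exact: ie]. Qed.

Lemma deg_blowup p : deg (blowup2 e) p = (2 * deg e p.2)%N.
Proof.
rewrite /deg.
have -> : [set v | blowup2 e p v] = setX [set: 'I_2] [set v | e p.2 v].
  by apply/setP => q; rewrite !inE.
by rewrite cardsX cardsT card_ord.
Qed.

Lemma sum_pair (g : 'I_2 * T -> R) y :
  \sum_(p | blowup2 e y p) g p = \sum_(x | e y.2 x) (g (z0, x) + g (z1, x)).
Proof.
transitivity (\sum_(m : 'I_2) \sum_(x | e y.2 x) g (m, x)).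
  by rewrite pair_big_dep /=; apply: eq_big => [[m x]|[m x] _].
rewrite big_ord_recl big_ord_recl big_ord0 addr0 -big_split /=.
have -> : (ord0 : 'I_2) = z0 by apply/val_inj.
by have -> : (lift z0 (ord0 : 'I_1) : 'I_2) = z1 by apply/val_inj.
Qed.

Lemma kerA_ext g1 g2 : g1 =1 g2 -> kerA g1 -> kerA g2.
Proof. move=> E H y; rewrite -[RHS](H y); apply: eq_bigr => x _; by rewrite E. Qed.

Lemma eigfun_blow d (g : 'I_2 * T -> R) : regular e d ->
  (eigfun (blowup2 e) ((2 * d)%N%:R) g <-> kerA (fun x => g (z0, x) + g (z1, x))).
Proof.
move=> rg; split.
- move=> H y; have := H (z0, y); rewrite deg_blowup rg sum_pair /= => H1; lra.
- move=> H y; rewrite deg_blowup rg sum_pair H; lra.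
Qed.

Theorem part1 d u : simple_graph e -> regular e d ->
  (strongly_cospectral R (blowup2 e) (z0, u) (z1, u) <->
   ~ eig_support e u (d%:R : R)).
Proof.
move=> sg rg.
have sg' := simple_blowup sg.
set e' := blowup2 e.
set L' := laplacian R e'.
set ea := evec R (z0, u); set eb := evec R (z1, u).
set z := ea - eb.
set D : R := (2 * d)%N%:R.
pose g0 (p : 'I_2 * T) : R := (p == (z0, u))%:R - (p == (z1, u))%:R.
have Eg0 : g0 =1 fun_of z^T.
  by move=> p; rewrite /fun_of !mxE enum_rankK.
have H2 : z^T *m L' = D *: z^T.
  apply/eig_row => //; apply: (eigfun_ext Eg0) => y.
  rewrite deg_blowup rg sum_pair big1 ?subr0 //.
  by move=> x _; rewrite /g0 !xpair_eqE /= subr0 sub0r subrr.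
have H3 : L' *m z = D *: z.
  have := congr1 trmx H2; rewrite trmx_mul trmxK lap_sym; last by case: sg'.
  by rewrite linearZ /= trmxK.
have H4 : forall lam, lam != D -> eigproj L' lam *m z = 0.
  move=> lam nD; rewrite /eigproj proj_ker col_ker => w /eigenspaceP Hw.
  have : (w *m L') *m z = w *m (L' *m z) by rewrite mulmxA.
  rewrite Hw H3 -scalemxAl -scalemxAr => /eqP; rewrite -subr_eq0 -scalerBl.
  by rewrite scaler_eq0 subr_eq0 (negbTE nD) /= => /eqP.
have H5 : eigproj L' D *m z = z.
  by apply: proj_id; apply/eigenspaceP.
have za : (z^T *m ea) 0 0 = 1.
  rewrite rowcol; rewrite /ea sum_evec /fun_of !mxE enum_rankK eqxx.
  by rewrite xpair_eqE /= subr0.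
have zne : z != 0.
  apply/eqP => z0'; move: za; rewrite z0' trmx0 mul0mx mxE => /eqP.
  by rewrite eq_sym oner_eq0.
have H6 : eigproj L' D *m ea != 0.
  apply/eqP; rewrite /eigproj proj_ker col_ker => H.
  have := H z^T; rewrite -/L'.
  have -> : (z^T <= eigenspace L' D)%MS by apply/eigenspaceP.
  move=> /(_ isT) /mx11_0; rewrite za => /eqP; by rewrite oner_eq0.
have SCE : strongly_cospectral R e' (z0, u) (z1, u) <->
           eigproj L' D *m (ea + eb) = 0.
  split.
  - move=> /(_ D H6) [H|H].
    + have : eigproj L' D *m z = 0 by rewrite mulmxBr H subrr.
      by rewrite H5 => /eqP; rewrite (negbTE zne).
    + by rewrite mulmxDr H addNr.
  - move=> H lam _; rewrite -/L' -/ea -/eb.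
    case: (eqVneq lam D) => [->|nD].
    + by right; apply/eqP; rewrite -addr_eq0 -mulmxDr H.
    + by left; apply/eqP; rewrite -subr_eq0 -mulmxBr H4.
rewrite SCE /eigproj proj_ker eig_ker // not_supp //.
have Es : forall g : 'I_2 * T -> R,
    \sum_y g y * (ea + eb) (enum_rank y) 0 = g (z0, u) + g (z1, u).
  move=> g; rewrite -(sum_evec g (z0, u)) -(sum_evec g (z1, u)) -big_split /=.
  by apply: eq_bigr => y _; rewrite mxE mulrDr.
split.
- move=> H g /(eigfun_reg g rg) Hg.
  pose g' (p : 'I_2 * T) : R := if p.1 == z0 then g p.2 else 0.
  have := H g'; rewrite Es /g' /= addr0; apply.
  apply/(eigfun_blow g' rg); apply: (kerA_ext _ Hg) => x /=.
  by rewrite addr0.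
- move=> H g /(eigfun_blow g rg) Hg; rewrite Es.
  exact: (H (fun x => g (z0, x) + g (z1, x)) (proj2 (eigfun_reg _ rg) Hg)).
Qed.
End Blowup.


Lemma part1' (R : rcfType) (T : finType) (e : rel T) d u :
  simple_graph e -> regular e d ->
  (strongly_cospectral R (blowup2 e) (z0, u) (z1, u) <->
   forall g : T -> R, kerA e g -> g u = 0).
Proof.
move=> sg rg; rewrite part1 // not_supp //.
split => H g Hg; apply: H; [exact/(eigfun_reg g rg) | exact/(eigfun_reg g rg)].
Qed.

Section Complete.
Variable R : rcfType.
Variable d : nat.

Lemma simple_K : simple_graph (@complete_graph d.+1).
Proof. split => [x y|x]; rewrite /complete_graph ?eqxx //; by rewrite eq_sym. Qed.

Lemma regular_K : regular (@complete_graph d.+1) d.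
Proof.
move=> i; rewrite /deg.
have -> : [set j | complete_graph i j] = [set~ i].
  by apply/setP => j; rewrite !inE /complete_graph eq_sym.
by rewrite cardsC1 card_ord.
Qed.

Lemma kerA_K (g : 'I_d.+1 -> R) u : (1 <= d)%N -> kerA (@complete_graph d.+1) g -> g u = 0.
Proof.
move=> d1 H.
set S := \sum_x g x.
have Hy : forall y, g y = S.
  move=> y; rewrite /S (bigD1 y) //= -[LHS]addr0; congr (_ + _).
  symmetry; rewrite -[RHS](H y); apply: eq_bigl => x; by rewrite /complete_graph eq_sym.
have : S = S *+ d.+1 by rewrite {1}/S (eq_bigr (fun _ => S)) ?sumr_const ?card_ord // => x _; exact: Hy.
rewrite mulrS => /eqP; rewrite -subr_eq0 opprD addrA subrr sub0r oppr_eq0 mulrn_eq0.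
have -> : (d == 0%N) = false by case: d d1.
by rewrite /= Hy => /eqP.
Qed.
End Complete.


Section Cycle.
Variable R : rcfType.
Variable n : nat.
Hypothesis Hn : (2 < n)%N.

Lemma n0 : (0 < n)%N. Proof. by apply: ltnW; apply: ltnW. Qed.

Definition pt k : 'I_n := Ordinal (ltn_pmod k n0).

Lemma pred_val (y : 'I_n) :
  ((y + n.-1) %% n = if nat_of_ord y == 0 then n.-1 else (nat_of_ord y).-1)%N.
Proof.
have := ltn_ord y; case: eqP => [->|ny] yn.
  by rewrite add0n modn_small //; lia.
have -> : (y + n.-1 = (nat_of_ord y).-1 + n)%N by lia.
by rewrite modnDr modn_small //; lia.
Qed.

Lemma succ_val (y : 'I_n) :
  ((nat_of_ord y).+1 %% n = if (nat_of_ord y).+1 == n then 0 else (nat_of_ord y).+1)%N.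
Proof.
have := ltn_ord y; case: eqP => [->|ny] yn; first by rewrite modnn.
by rewrite modn_small //; lia.
Qed.

Lemma cyc_adj (y x : 'I_n) :
  @cycle_graph n y x = (x == pt (nat_of_ord y).+1) || (x == pt (y + n.-1)).
Proof.
rewrite /cycle_graph -!val_eqE /=; congr orb.
rewrite succ_val pred_val; move: (ltn_ord x) (ltn_ord y) Hn.
case: ((nat_of_ord x).+1 =P n); case: (nat_of_ord y =P 0%N) => *; lia.
Qed.

Lemma pt_neq (y : 'I_n) : pt (nat_of_ord y).+1 != pt (y + n.-1).
Proof.
rewrite -val_eqE /= succ_val pred_val; move: (ltn_ord y) Hn.
case: ((nat_of_ord y).+1 =P n); case: (nat_of_ord y =P 0%N) => *; lia.
Qed.

Lemma nbr_cyc (y : 'I_n) :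
  [set x | @cycle_graph n y x] = [set pt (nat_of_ord y).+1; pt (y + n.-1)].
Proof. by apply/setP => x; rewrite !inE cyc_adj. Qed.

Lemma simple_C : simple_graph (@cycle_graph n).
Proof.
split => [x y|x]; first by rewrite /cycle_graph orbC.
rewrite cyc_adj -!val_eqE /= succ_val pred_val; move: (ltn_ord x) Hn.
case: ((nat_of_ord x).+1 =P n); case: (nat_of_ord x =P 0%N) => *; lia.
Qed.

Lemma regular_C : regular (@cycle_graph n) 2.
Proof. by move=> y; rewrite /deg nbr_cyc cards2 pt_neq. Qed.

Lemma sum_cyc (g : 'I_n -> R) y :
  \sum_(x | @cycle_graph n y x) g x = g (pt (nat_of_ord y).+1) + g (pt (y + n.-1)).
Proof.
transitivity (\sum_(x in [set pt (nat_of_ord y).+1; pt (y + n.-1)]) g x).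
  by apply: eq_bigl => x; rewrite -nbr_cyc inE.
by rewrite big_setU1 ?big_set1 // inE pt_neq.
Qed.

Definition c4 (m : nat) : R :=
  if (m %% 4 == 0)%N then 1 else if (m %% 4 == 2)%N then -1 else 0.

Lemma c4_lem a b : (a %% 4 = (b + 2) %% 4)%N -> c4 a + c4 b = 0.
Proof.
rewrite /c4 => ->; rewrite -modnDml.
have := ltn_pmod b (isT : (0 < 4)%N).
case: (b %% 4)%N => [|[|[|[|r]]]] //= _; rewrite ?addr0 ?add0r ?subrr ?addNr //.
Qed.

Lemma cyc_div4 u : (4 %| n)%N ->
  exists g : 'I_n -> R, kerA (@cycle_graph n) g /\ g u != 0.
Proof.
move=> /dvdnP [k Ek].
exists (fun x : 'I_n => c4 (x + (n - u))); split.
- move=> y; rewrite sum_cyc addrC; apply: c4_lem => /=.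
  rewrite succ_val pred_val; move: (ltn_ord y) (ltn_ord u) Hn.
  case: ((nat_of_ord y).+1 =P n); case: (nat_of_ord y =P 0%N) => *; lia.
- have -> : (u + (n - u) = n)%N by move: (ltn_ord u); lia.
  by rewrite /c4 Ek modnMl eqxx oner_eq0.
Qed.

Lemma cyc_ndiv4 u (g : 'I_n -> R) : ~~ (4 %| n)%N -> kerA (@cycle_graph n) g -> g u = 0.
Proof.
move=> n4 H.
pose h k := g (pt (u + k)).
have rec : forall k, h k.+2 = - h k.
  move=> k; apply/eqP; rewrite -addr_eq0; apply/eqP.
  have := H (pt (u + k.+1)); rewrite sum_cyc; congr (g _ + g _ = _).
  + apply/val_inj => /=; rewrite -addn1 modnDml; congr (_ %% _)%N; lia.
  + apply/val_inj => /=; rewrite modnDml.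
    have -> : (u + k.+1 + n.-1 = (u + k) + n)%N by move: n0; lia.
    by rewrite modnDr.
have ev : forall j, h (2 * j)%N = (-1) ^+ j * h 0%N.
  elim => [|j IH]; first by rewrite mul1r.
  have -> : (2 * j.+1 = (2 * j).+2)%N by lia.
  by rewrite rec IH exprS mulN1r mulNr.
have h0 : h 0%N = g u.
  by rewrite /h; congr g; apply/val_inj => /=; rewrite addn0 modn_small.
case On : (odd n).
- have := ev n; have -> : h (2 * n)%N = h 0%N.
    by rewrite /h; congr g; apply/val_inj => /=; rewrite addn0 addnC modnMDl.
  rewrite -signr_odd On expr1 h0 => E; lra.
- set m := n./2.
  have Em : n = (2 * m)%N by have := odd_double_half n; rewrite On add0n -mul2n.
  have Om : odd m.
    apply/negP => /negP Om; move: n4; rewrite Em.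
    have := odd_double_half m; rewrite (negbTE Om) add0n -mul2n => <-.
    by rewrite mulnA dvdn_mulr.
  have := ev m; have -> : h (2 * m)%N = h 0%N.
    by rewrite /h -Em; congr g; apply/val_inj => /=; rewrite modnDr addn0.
  rewrite -signr_odd Om expr1 h0 => E; lra.
Qed.
End Cycle.


Section Cube.
Variable R : rcfType.
Variable d : nat.
Notation V := {ffun 'I_d -> bool}.

Definition flip (x : V) (i : 'I_d) : V := [ffun j => if j == i then ~~ x j else x j].

Lemma flipK x i : flip (flip x i) i = x.
Proof. by apply/ffunP => j; rewrite !ffunE; case: eqP => // _; rewrite negbK. Qed.

Lemma flip_inj x : injective (flip x).
Proof.
move=> i j E; have := congr1 (fun f : V => f i) E; rewrite !ffunE eqxx.
case: (i =P j) => // _; by case: (x i).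
Qed.

Lemma cube_adj y x : hypercube y x = (x \in flip y @: setT).
Proof.
apply/idP/idP.
- move/cards1P => [i Ei]; apply/imsetP; exists i; first by rewrite inE.
  move/setP: Ei => Ei; apply/ffunP => k; rewrite ffunE; have := Ei k; rewrite !inE.
  case: (k =P i) => [->|_] /=.
  + by case: (y i); case: (x i).
  + by move/negbFE/eqP ->.
- move/imsetP => [i _ ->]; apply/cards1P; exists i; apply/setP => k.
  by rewrite !inE ffunE; case: (k =P i) => _ /=; [case: (y k) | rewrite eqxx].
Qed.

Lemma simple_Q : simple_graph (@hypercube d).
Proof.
split => [x y|x]; rewrite /hypercube.
- have -> : [set i | x i != y i] = [set i | y i != x i].
    by apply/setP => k; rewrite !inE eq_sym.
  by [].
- have -> : [set i | x i != x i] = set0 by apply/setP => k; rewrite !inE eqxx.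
  by rewrite cards0.
Qed.

Lemma regular_Q : regular (@hypercube d) d.
Proof.
move=> y; rewrite /deg.
have -> : [set x | hypercube y x] = flip y @: setT by apply/setP => x; rewrite inE cube_adj.
by rewrite card_imset ?cardsT ?card_ord //; exact: flip_inj.
Qed.

Lemma sum_cube (g : V -> R) y :
  \sum_(x | hypercube y x) g x = \sum_i g (flip y i).
Proof.
transitivity (\sum_(x in flip y @: setT) g x).
  by apply: eq_bigl => x; rewrite cube_adj.
rewrite big_imset /=; last by move=> i j _ _; exact: flip_inj.
by apply: eq_bigl => i; rewrite inE.
Qed.

Definition chi (s x : V) : R := \prod_i (if s i && x i then -1 else 1).

Lemma chi_flip s x i : chi s (flip x i) = (if s i then -1 else 1) * chi s x.
Proof.
rewrite /chi (bigD1 i) // [in RHS](bigD1 i) //= mulrA; congr (_ * _).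
- by rewrite ffunE eqxx; case: (s i); case: (x i) => /=; rewrite ?mulN1r ?opprK ?mulr1.
- by apply: eq_bigr => j ne; rewrite ffunE (negbTE ne).
Qed.

Lemma chi_neq0 s x : chi s x != 0.
Proof.
apply/prodf_neq0 => i _; case: ifP => _; by rewrite ?oppr_eq0 oner_eq0.
Qed.

Definition csum (s : V) : R := \sum_i (if s i then -1 else 1).

Lemma A_chi s y : \sum_i chi s (flip y i) = csum s * chi s y.
Proof.
rewrite /csum mulr_suml; apply: eq_bigr => i _; exact: chi_flip.
Qed.

Lemma csum_even : ~~ odd d -> csum [ffun i : 'I_d => odd i] = 0.
Proof.
move=> ev; rewrite /csum.
under eq_bigr => i _ do rewrite ffunE.
rewrite -(big_mkord xpredT (fun i => if odd i then -1 else 1)).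
have -> : d = (2 * d./2)%N by have := odd_double_half d; rewrite (negbTE ev) add0n -mul2n.
elim: d./2 => [|k IH]; first by rewrite big_geq.
have -> : (2 * k.+1 = (2 * k).+1.+1)%N by lia.
rewrite big_nat_recr // big_nat_recr //= IH oddM /= add0r addrN.
by [].
Qed.

Lemma csum_odd s : odd d -> csum s != 0.
Proof.
move=> od; apply/eqP => E.
have : csum s + 2 * (\sum_i (s i : nat))%:R = d%:R.
  rewrite natr_sum mulr_sumr /csum -big_split /=.
  rewrite -[in RHS](card_ord d) -sumr_const; apply: eq_bigr => i _.
  by case: (s i) => /=; lra.
rewrite E add0r -natrM => /eqP; rewrite eqr_nat => /eqP Ed.
by move: od; rewrite -Ed oddM.
Qed.

Definition ghat (g : V -> R) (s : V) := \sum_x g x * chi s x.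

Lemma ghat0 g s : kerA (@hypercube d) g -> csum s * ghat g s = 0.
Proof.
move=> H.
have E1 : \sum_y (\sum_i g (flip y i)) * chi s y = 0.
  by apply: big1 => y _; rewrite -sum_cube H mul0r.
have E2 : \sum_y (\sum_i g (flip y i)) * chi s y = \sum_x g x * \sum_i chi s (flip x i).
  under eq_bigr => y _ do rewrite mulr_suml.
  rewrite exchange_big /=.
  under [RHS]eq_bigr => x _ do rewrite mulr_sumr.
  rewrite [RHS]exchange_big /=; apply: eq_bigr => i _.
  rewrite (reindex (flip^~ i)) /=; last by exists (flip^~ i) => x _; exact: flipK.
  by apply: eq_bigr => x _; rewrite flipK.
rewrite -E1 E2 /ghat mulr_sumr; apply: eq_bigr => x _; rewrite A_chi; ring.
Qed.

Lemma chi_orth x u : \sum_s chi s x * chi s u = if x == u then 2 ^+ d else 0.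
Proof.
have E : forall s, chi s x * chi s u =
   \prod_i (fun i b => (if b && x i then -1 else 1) * (if b && u i then -1 else 1)) i (s i).
  by move=> s; rewrite /chi -big_split.
under eq_bigr => s _ do rewrite E.
rewrite -(bigA_distr_bigA (fun i b => (if b && x i then -1 else 1) * (if b && u i then (-1 : R) else 1))).
under eq_bigr => i _ do rewrite big_bool /=.
case: eqP => [->|ne].
- rewrite (eq_bigr (fun _ => 2)); first by rewrite prodr_const card_ord.
  by move=> i _; case: (u i) => /=; clear E; lra.
- case: (boolP [forall i, x i == u i]) => [/forallP A | /forallPn [i Hi]].
    by exfalso; apply: ne; apply/ffunP => i; apply/eqP.
  rewrite (bigD1 i) //=; apply/eqP; rewrite mulf_eq0; apply/orP; left.
  move: Hi; case: (x i); case: (u i) => //= _; apply/eqP; clear E ne; lra.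
Qed.

Lemma cube_odd u (g : V -> R) : odd d -> kerA (@hypercube d) g -> g u = 0.
Proof.
move=> od H.
have Hg : forall s, ghat g s = 0.
  move=> s; have := ghat0 s H; move/eqP; rewrite mulf_eq0 (negbTE (csum_odd s od)) /=.
  by move/eqP.
have : \sum_s ghat g s * chi s u = 2 ^+ d * g u.
  rewrite /ghat; under eq_bigr => s _ do rewrite mulr_suml.
  rewrite exchange_big /=.
  under eq_bigr => x _ do (under eq_bigr => s _ do rewrite -mulrA; rewrite -mulr_sumr chi_orth).
  rewrite (bigD1 u) //= eqxx big1 ?addr0; first by rewrite mulrC.
  by move=> x /negbTE ->; rewrite mulr0.
rewrite big1; last by move=> s _; rewrite Hg mul0r.
move/eqP; rewrite eq_sym mulf_eq0 expf_eq0 pnatr_eq0 andbF /=.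
by move/eqP.
Qed.

Lemma cube_even u : ~~ odd d ->
  exists g : V -> R, kerA (@hypercube d) g /\ g u != 0.
Proof.
move=> ev; exists (chi [ffun i : 'I_d => odd i]); split; last exact: chi_neq0.
by move=> y; rewrite sum_cube A_chi csum_even // mul0r.
Qed.
End Cube.

Theorem corollary3 (R : rcfType) :
  (forall (T : finType) (e : rel T) (d : nat) (u : T),
      simple_graph e -> regular e d ->
      (strongly_cospectral R (blowup2 e) (z0, u) (z1, u) <->
       ~ eig_support e u (d%:R : R)))
  /\ (forall (d : nat) (u : 'I_d.+1), (1 <= d)%N ->
      strongly_cospectral R (blowup2 (@complete_graph d.+1)) (z0, u) (z1, u))
  /\ (forall (n : nat) (u : 'I_n), (3 <= n)%N ->
      (strongly_cospectral R (blowup2 (@cycle_graph n)) (z0, u) (z1, u) <->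
       ~~ (4 %| n)%N))
  /\ (forall (d : nat) (u : {ffun 'I_d -> bool}),
      (strongly_cospectral R (blowup2 (@hypercube d)) (z0, u) (z1, u) <->
       odd d)).
Proof.
split; [|split; [|split]].
- move=> T e d u sg rg; exact: part1.
- move=> d u d1; rewrite (part1' R u (@simple_K d) (@regular_K d)) => g Hg.
  exact: kerA_K d1 Hg.
- move=> n u n3; rewrite (part1' R u (simple_C n3) (regular_C n3)); split.
  + move=> H; apply/negP => /(cyc_div4 R n3 u) [g [Hg gu]].
    by move: gu; rewrite (H g Hg) eqxx.
  + move=> n4 g Hg; exact: cyc_ndiv4 n4 Hg.
- move=> d u; rewrite (part1' R u (@simple_Q d) (@regular_Q d)); split.
  + move=> H; case: (boolP (odd d)) => // ev.
    have [g [Hg gu]] := cube_even R u ev.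
    by move: gu; rewrite (H g Hg) eqxx.
  + move=> od g Hg; exact: cube_odd od Hg.
Qed.
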